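(* Let $p$ be a propositional variable. The infinite set $\Sigma=\{\blacksquare^n p: n\in\mathbb{N}\}\cup\{\neg\mathsf{H}p\}$ is not satisfiable in any $\mathsf{TLAE}$-model (there is no $\mathsf{TLAE}$-model $\mathfrak{M}$ and moment $w$ with $\mathfrak{M},w\models\psi$ for all $\psi\in\Sigma$), whereas every finite subset of $\Sigma$ is satisfiable at some moment of some $\mathsf{TLAE}$-model. Consequently $\mathsf{TLAE}$ is not compact with respect to $\mathsf{TLAE}$-models.
   Context: Here $\blacksquare^n$ denotes $n$-fold iteration of $\blacksquare$ ($\blacksquare^0 p=p$). Language: fix finite sets $\mathtt{Action}=\{\delta_1,\dots,\delta_n\}$, $\mathtt{Agent}=\{\alpha_1,\dots,\alpha_m\}$; action types $\mathtt{Action}^*$ generated by $\Delta::=\delta_j\mid\Delta\cup\Delta\mid\overline{\Delta}$; propositional constants $\mathfrak{d}^{\alpha_i}_j$, $\mathfrak{e}^{\alpha_i}$; variables $\mathtt{Var}$. Formulas: $\phi::=p\mid\mathfrak{e}^{\alpha_i}\mid\mathfrak{d}^{\alpha_i}_j\mid\neg\phi\mid\phi\to\phi\mid\Box\phi\mid[\mathsf{A}]\phi\mid\blacksquare\phi\mid\mathsf{H}\phi$. Translation: $t(\delta_j^{\alpha_i})=\mathfrak{d}^{\alpha_i}_j$, $t(\overline{\Delta}^{\alpha_i})=\neg t(\Delta^{\alpha_i})$, $t(\Delta^{\alpha_i}\cup\Gamma^{\alpha_k})=t(\Delta^{\alpha_i})\vee t(\Gamma^{\alpha_k})$. Semantics: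 an $\mathcal{L}$-frame is $\langle W,\{W_{\mathfrak{d}^{\alpha_i}_j}\},\{W_{\mathfrak{e}^{\alpha_i}}\},R_\Box,R_{\mathsf{A}},R_\blacksquare,R_{\mathsf{H}}\rangle$ with subsets $W_c\subseteq W$ and binary relations on $W$; a model adds $V:\mathtt{Var}\to\mathcal{P}(W)$; constants $c$ are true exactly on $W_c$; $\Box,[\mathsf{A}],\blacksquare,\mathsf{H}$ are interpreted by universal quantification over $R_\Box,R_{\mathsf{A}},R_\blacksquare,R_{\mathsf{H}}$-successors, Booleans as usual. $W_{t(\delta_j^{\alpha_i})}=W_{\mathfrak{d}^{\alpha_i}_j}$, $W_{t(\overline{\Delta}^{\alpha_i})}=W\setminus W_{t(\Delta^{\alpha_i})}$, $W_{t(\Delta^{\alpha_i}\cup\Gamma^{\alpha_k})}=W_{t(\Delta^{\alpha_i})}\cup W_{t(\Gamma^{\alpha_k})}$. A $\mathsf{TLAE}$-frame satisfies: (pA3) $R_{\mathsf{A}}wu\wedge R_{\mathsf{A}}wv\Rightarrow u=v$; (pA4) $R_{\mathsf{A}}\subseteq R_\Box$; (pA5) for every $w$, pairwise distinct agents $\alpha_1,\dots,\alpha_k$ and $\Delta_1,\dots,\Delta_k\in\mathtt{Action}^*$, if each $W_{t(\Delta_i^{\alpha_i})}$ contains an $R_\Box$-successor of $w$, then $\bigcap_iW_{t(\Delta_i^{\alpha_i})}$ contains one; (pA6) if some $R_\Box$-successor of $w$ is in $W_{\mathfrak{e}^{\alpha_i}}$ then some $R_\Box$-successor of $w$ is not;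 (pA10;A11) $R_\Box wv$ iff $R_\blacksquare vw$; (pA12) $R_\blacksquare wu\wedge R_\blacksquare wv\Rightarrow u=v$; (pA9;A14) $R_{\mathsf{H}}$ is the transitive closure of $R_\blacksquare$; (pA13) for every $w$, either $w$ has no $R_{\mathsf{H}}$-successor or there is $u$ with $R_{\mathsf{H}}wu$ having no $R_{\mathsf{H}}$-successor. A $\mathsf{TLAE}$-model is a model over a $\mathsf{TLAE}$-frame. *)

(* Defs.v *)
From mathcomp Require Import all_boot.
From Stdlib Require Import List Relation_Operators.

Unset Printing Implicit Defensive.

(* Action = 'I_nA  (delta_1..delta_nA), Agent = 'I_nG  (alpha_1..alpha_nG),
   propositional variables Var = nat. *)

Inductive actType (nA : nat) : Type :=
  | AAtom : 'I_nA -> actType nA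
  | AUnion : actType nA -> actType nA -> actType nA
  | ACompl : actType nA -> actType nA.

Inductive form (nA nG : nat) : Type :=
  | FVar : nat -> form nA nG
  | FE : 'I_nG -> form nA nG
  | FD : 'I_nG -> 'I_nA -> form nA nG
  | FNeg : form nA nG -> form nA nG
  | FImp : form nA nG -> form nA nG -> form nA nG
  | FBox : form nA nG -> form nA nG
  | FAct : form nA nG -> form nA nG
  | FBBox : form nA nG -> form nA nG
  | FH : form nA nG -> form nA nG.

Arguments FVar {nA nG}.
Arguments FE {nA nG}.
Arguments FD {nA nG}.
Arguments FNeg {nA nG}.
Arguments FImp {nA nG}.
Arguments FBox {nA nG}.
Arguments FAct {nA nG}.
Arguments FBBox {nA nG}.
Arguments FH {nA nG}.
Arguments AAtom {nA}.
Arguments AUnion {nA}.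
Arguments ACompl {nA}.

Fixpoint tr {nA nG : nat} (a : 'I_nG) (D : actType nA) : form nA nG :=
  match D with
  | AAtom j => FD a j
  | AUnion D1 D2 => FImp (FNeg (tr a D1)) (tr a D2)   (* phi \/ psi := ~phi -> psi *)
  | ACompl D1 => FNeg (tr a D1)
  end.

Record frame (nA nG : nat) : Type := Frame {
  W : Type;
  Wd : 'I_nG -> 'I_nA -> W -> Prop;
  We : 'I_nG -> W -> Prop;
  RBox : W -> W -> Prop;
  RA : W -> W -> Prop;
  RBB : W -> W -> Prop;
  RH : W -> W -> Prop
}.

Arguments W {nA nG}.
Arguments Wd {nA nG}.
Arguments We {nA nG}.
Arguments RBox {nA nG}.
Arguments RA {nA nG}.
Arguments RBB {nA nG}.
Arguments RH {nA nG}.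

Record model (nA nG : nat) : Type := Model {
  mframe : frame nA nG;
  V : nat -> W mframe -> Prop
}.

Arguments mframe {nA nG}.
Arguments V {nA nG}.

Fixpoint ext {nA nG : nat} (F : frame nA nG) (a : 'I_nG) (D : actType nA)
  : W F -> Prop :=
  match D with
  | AAtom j => Wd F a j
  | AUnion D1 D2 => fun x => ext F a D1 x \/ ext F a D2 x
  | ACompl D1 => fun x => ~ ext F a D1 x
  end.

Fixpoint sat {nA nG : nat} (M : model nA nG) (w : W (mframe M)) (phi : form nA nG)
  : Prop :=
  match phi with
  | FVar q => V M q w
  | FE a => We (mframe M) a w
  | FD a j => Wd (mframe M) a j w
  | FNeg psi => ~ sat M w psi
  | FImp psi chi => sat M w psi -> sat M w chi
  | FBox psi => forall v, RBox (mframe M) w v -> sat M v psi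
  | FAct psi => forall v, RA (mframe M) w v -> sat M v psi
  | FBBox psi => forall v, RBB (mframe M) w v -> sat M v psi
  | FH psi => forall v, RH (mframe M) w v -> sat M v psi
  end.

Definition TLAE_frame {nA nG : nat} (F : frame nA nG) : Prop :=
  (forall w u v, RA F w u -> RA F w v -> u = v) /\
  (forall w u, RA F w u -> RBox F w u) /\
  (forall (w : W F) (s : list ('I_nG * actType nA)%type),
      s <> nil -> List.NoDup (List.map fst s) ->
      (forall c, List.In c s -> exists v, RBox F w v /\ ext F c.1 c.2 v) ->
      exists v, RBox F w v /\ forall c, List.In c s -> ext F c.1 c.2 v) /\
  (forall w (a : 'I_nG),
      (exists v, RBox F w v /\ We F a v) ->
      exists v, RBox F w v /\ ~ We F a v) /\
  (forall w v, RBox F w v <-> RBB F v w) /\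
  (forall w u v, RBB F w u -> RBB F w v -> u = v) /\
  (forall w v, RH F w v <-> clos_trans (W F) (RBB F) w v) /\
  (forall w, (forall u, ~ RH F w u) \/
             exists u, RH F w u /\ forall v, ~ RH F u v).

Definition TLAE_model {nA nG : nat} (M : model nA nG) : Prop :=
  TLAE_frame (mframe M).

Definition TLAE_satisfiable {nA nG : nat} (G : form nA nG -> Prop) : Prop :=
  exists (M : model nA nG) (w : W (mframe M)),
    TLAE_model M /\ forall phi, G phi -> sat M w phi.

Definition TLAE_compact (nA nG : nat) : Prop :=
  forall G : form nA nG -> Prop,
    (forall l : list (form nA nG), (forall phi, List.In phi l -> G phi) ->
       TLAE_satisfiable (fun phi => List.In phi l)) ->
    TLAE_satisfiable G.

Definition Sigma (nA nG : nat) (p : nat) (phi : form nA nG) : Prop :=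
  (exists k : nat, phi = iter k FBBox (FVar p)) \/ phi = FNeg (FH (FVar p)).

(* Main.v *)
Require Import Defs.
From mathcomp Require Import all_boot.
From Stdlib Require Import List Relation_Operators Operators_Properties Lia.
From mathcomp Require Import zify.

Lemma unsat_aux {nA nG : nat} (M : model nA nG) (p : nat) :
  forall w v, clos_trans_1n _ (RBB (mframe M)) w v ->
  (forall k, sat M w (iter k FBBox (FVar p))) -> sat M v (FVar p).
Proof.
  intros w v H; induction H as [w v Hr | w y z Hr Hc IH]; intros Hk.
  - exact (Hk 1%nat v Hr).
  - apply IH. intros k. exact (Hk (S k) y Hr).
Qed.

Lemma part1 (nA nG p : nat) : ~ TLAE_satisfiable (Sigma nA nG p).
Proof.
  intros [M [w [HT Hs]]].
  destruct HT as [_ [_ [_ [_ [_ [_ [HH _]]]]]]].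
  assert (Hk : forall k, sat M w (iter k FBBox (FVar p))).
  { intros k. apply Hs. left. exists k. reflexivity. }
  assert (Hn : sat M w (FNeg (FH (FVar p)))) by (apply Hs; right; reflexivity).
  apply Hn. intros v Hv. apply HH in Hv.
  apply clos_trans_t1n in Hv. exact (unsat_aux M p w v Hv Hk).
Qed.

Definition chainF (nA nG m : nat) : frame nA nG :=
  Frame nA nG nat (fun _ _ _ => False) (fun _ _ => False)
    (fun w v => w = S v /\ v < m)%coq_nat
    (fun _ _ => False)
    (fun w v => v = S w /\ w < m)%coq_nat
    (clos_trans nat (fun w v => v = S w /\ w < m)%coq_nat).

Definition chainM (nA nG m : nat) : model nA nG :=
  Model nA nG (chainF nA nG m) (fun _ i => (i < m)%coq_nat).

Lemma chain_reach m : forall d i, (i + S d = m)%coq_nat ->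
  clos_trans nat (fun w v => v = S w /\ w < m)%coq_nat i m.
Proof.
  induction d as [|d IH]; intros i Hi.
  - apply t_step. split; lia.
  - apply t_trans with (S i). apply t_step; split; lia. apply IH; lia.
Qed.

Lemma chain_reach_le m w : forall v,
  clos_trans nat (fun w v => v = S w /\ w < m)%coq_nat w v -> (v <= m)%coq_nat.
Proof.
  intros v H; induction H as [x y [H1 H2]|]; lia.
Qed.

Lemma chain_TLAE nA nG m : TLAE_model (chainM nA nG m).
Proof.
  unfold TLAE_model, TLAE_frame; simpl.
  split; [intros; contradiction|].
  split; [intros; contradiction|].
  split.
  { intros w s Hs _ Hc. destruct s as [|c s]; [congruence|].
    destruct (Hc c (or_introl (@Logic.eq_refl _ _))) as [v [Hv _]].
    exists v. split; [exact Hv|]. intros c' Hc'.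
    destruct (Hc c' Hc') as [v' [Hv' He]].
    assert (v = v') by lia. subst. exact He. }
  split; [intros w a [v [_ []]]|].
  split; [intros; split; intros; lia|].
  split; [intros; lia|].
  split; [intros; split; auto|].
  intros w. destruct (Compare_dec.lt_dec w m) as [Hw|Hw].
  - right. exists m. split.
    + apply (chain_reach m (Nat.sub m (S w))). lia.
    + intros v Hv. apply clos_trans_t1n in Hv. destruct Hv as [v [? ?] | y v [? ?] ?]; lia.
  - left. intros u Hu. apply clos_trans_t1n in Hu. destruct Hu as [u [? ?] | y u [? ?] ?]; lia.
Qed.

Lemma chain_sat nA nG m p : forall k i, (i + k < m)%coq_nat ->
  sat (chainM nA nG m) i (iter k FBBox (FVar p)).
Proof.
  induction k as [|k IH]; intros i Hi; simpl.
  - lia.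
  - intros v [Hv _]. subst. apply IH. lia.
Qed.

Lemma bound (nA nG p : nat) : forall l : list (form nA nG),
  (forall phi, List.In phi l -> Sigma nA nG p phi) ->
  exists m, (0 < m)%coq_nat /\ forall phi, List.In phi l ->
    (exists k, (k < m)%coq_nat /\ phi = iter k FBBox (FVar p)) \/ phi = FNeg (FH (FVar p)).
Proof.
  induction l as [|a l IH]; intros Hl.
  - exists 1%nat. split; [lia|]. intros phi [].
  - destruct IH as [m [Hm IH]]. { intros phi Hp. apply Hl. right. exact Hp. }
    destruct (Hl a (or_introl (@Logic.eq_refl _ _))) as [[k Hk] | Hk].
    + exists (S (m + k)). split; [lia|]. intros phi [<- | Hp].
      * left. exists k. split; [lia|exact Hk].
      * destruct (IH phi Hp) as [[j [Hj Hj']] | H]; [left; exists j; split; [lia|exact Hj'] | right; exact H].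
    + exists m. split; [exact Hm|]. intros phi [<- | Hp]; [right; exact Hk | exact (IH phi Hp)].
Qed.

Lemma part2 (nA nG p : nat) : forall l : list (form nA nG),
  (forall phi, List.In phi l -> Sigma nA nG p phi) ->
  TLAE_satisfiable (fun phi => List.In phi l).
Proof.
  intros l Hl. destruct (bound nA nG p l Hl) as [m [Hm Hb]].
  exists (chainM nA nG m). exists (0%nat : nat). split; [apply chain_TLAE|].
  intros phi Hp. destruct (Hb phi Hp) as [[k [Hk ->]] | ->].
  - apply chain_sat. lia.
  - simpl. intros H. assert (Hr : clos_trans nat (fun w v => v = S w /\ w < m)%coq_nat 0%nat m).
    { apply (chain_reach m (Nat.sub m 1)). lia. }
    specialize (H m Hr). simpl in H. lia.
Qed.

Theorem mainTheorem5 (nA nG : nat) (p : nat) :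
  ~ TLAE_satisfiable (Sigma nA nG p) /\
  (forall l : list (form nA nG),
      (forall phi, List.In phi l -> Sigma nA nG p phi) ->
      TLAE_satisfiable (fun phi => List.In phi l)) /\
  ~ TLAE_compact nA nG.
Proof.
  split; [apply part1|]. split; [apply part2|].
  intros Hc. apply (part1 nA nG p). apply Hc. apply part2.
Qed.
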